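(* Let $\{S(u,v),S_1(u_1,v_1)\}$ be Bertrand pair surfaces with $\{x,x_1\}$ a Bertrand D-pair ($x$ on $S$, $x_1$ on $S_1$). Let $(k_g)_1,(k_g)_2$ be the geodesic curvatures of the parametric curves of $S(u,v)$ and $(k_{g_1})_1,(k_{g_1})_2$ those of the parametric curves of $S_1(u_1,v_1)$. Let $\sigma$ be the angle between $x(s)$ and the parametric curve $v=\text{const}$ of $S$, and $\sigma_1$ the angle between $x_1(s_1)$ and the parametric curve $v_1=\text{const}$ of $S_1$. Then $$\Big(\tfrac{d\sigma}{ds} + (k_g)_1 \cos\sigma + (k_g)_2\sin\sigma\Big) - \Big(\tfrac{d\sigma_1}{ds_1} + (k_{g_1})_1\cos\sigma_1 + (k_{g_1})_2\sin\sigma_1\Big) = \lambda\Big[\Big(\tfrac{d\sigma}{ds} + (k_g)_1\cos\sigma + (k_g)_2\sin\sigma\Big)\Big(\tfrac{d\sigma_1}{ds_1} + (k_{g_1})_1\cos\sigma_1 + (k_{g_1})_2\sin\sigma_1\Big) - \tau_g\tau_{g_1}\Big].$$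
   Context: For a unit-speed curve $x(s)$ on an oriented surface $S\subset\mathbb{E}^3$, the Darboux frame is $\{T,g,n\}$ ($T$ unit tangent, $n$ unit surface normal along the curve, $g=n\times T$), with $\dot T = k_g g + k_n n$, $\dot g = -k_g T + \tau_g n$, $\dot n = -k_n T - \tau_g g$; $k_g,k_n,\tau_g$ are the geodesic curvature, normal curvature and geodesic torsion. For $x_1(s_1)$ on $S_1$ the analogous objects carry subscript $1$. $\{x,x_1\}$ is a Bertrand D-pair if there is a correspondence of points such that at corresponding points $g$ coincides with $g_1$; then $\{S,S_1\}$ are called Bertrand pair surfaces, and $x(s)=x_1(s_1)+\lambda g_1(s_1)$ at corresponding points with $\lambda$ a nonzero constant. *)

(* Defs.v *)
From Stdlib Require Import Reals.
From Coquelicot Require Import Coquelicot.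
Open Scope R_scope.

Definition V3 : Type := (R * R * R)%type.
Definition c1 (w : V3) : R := fst (fst w).
Definition c2 (w : V3) : R := snd (fst w).
Definition c3 (w : V3) : R := snd w.
Definition zero3 : V3 := (0, 0, 0).
Definition vadd (a b : V3) : V3 := (c1 a + c1 b, c2 a + c2 b, c3 a + c3 b).
Definition vscale (k : R) (a : V3) : V3 := (k * c1 a, k * c2 a, k * c3 a).
Definition dot (a b : V3) : R := c1 a * c1 b + c2 a * c2 b + c3 a * c3 b.
Definition cross (a b : V3) : V3 :=
  (c2 a * c3 b - c3 a * c2 b, c3 a * c1 b - c1 a * c3 b, c1 a * c2 b - c2 a * c1 b).
Definition vnorm (a : V3) : R := sqrt (dot a a).
Definition vunit (a : V3) : V3 := vscale (/ vnorm a) a.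

Definition vD (f : R -> V3) (t : R) : V3 :=
  (Derive (fun t => c1 (f t)) t, Derive (fun t => c2 (f t)) t,
   Derive (fun t => c3 (f t)) t).

Definition pu (X : R -> R -> V3) (u v : R) : V3 := vD (fun t => X t v) u.
Definition pv (X : R -> R -> V3) (u v : R) : V3 := vD (fun t => X u t) v.

Definition diff2 (f : R -> R -> R) (u v : R) : Prop :=
  differentiable_pt_lim f u v (Derive (fun t => f t v) u) (Derive (fun t => f u t) v).
Definition vdiff2 (F : R -> R -> V3) (u v : R) : Prop :=
  diff2 (fun a b => c1 (F a b)) u v /\ diff2 (fun a b => c2 (F a b)) u v /\
  diff2 (fun a b => c3 (F a b)) u v.

Definition regular_surface (X : R -> R -> V3) (D : R * R -> Prop) : Prop :=
  open D /\
  forall u v, D (u, v) ->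
    vdiff2 X u v /\ vdiff2 (pu X) u v /\ vdiff2 (pv X) u v /\
    cross (pu X u v) (pv X u v) <> zero3.

(* the parametric curves are orthogonal (F = 0), as required by Liouville's formula *)
Definition orthogonal_param (X : R -> R -> V3) (D : R * R -> Prop) : Prop :=
  forall u v, D (u, v) -> dot (pu X u v) (pv X u v) = 0.

Definition snormal (X : R -> R -> V3) (u v : R) : V3 :=
  vunit (cross (pu X u v) (pv X u v)).

(* geodesic curvature of the parametric curves through (u,v):
   for a regular curve c on S, k_g = <c'', n x c'> / |c'|^3 *)
Definition kg_u (X : R -> R -> V3) (u v : R) : R :=
  dot (vD (fun t => pu X t v) u) (cross (snormal X u v) (pu X u v))
  / (vnorm (pu X u v)) ^ 3.
Definition kg_v (X : R -> R -> V3) (u v : R) : R :=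
  dot (vD (fun t => pv X u t) v) (cross (snormal X u v) (pv X u v))
  / (vnorm (pv X u v)) ^ 3.

Definition curve (X : R -> R -> V3) (u v : R -> R) (s : R) : V3 := X (u s) (v s).
Definition tangent X u v (s : R) : V3 := vD (curve X u v) s.
Definition cnormal X u v (s : R) : V3 := snormal X (u s) (v s).
Definition cbinormal X u v (s : R) : V3 :=
  cross (cnormal X u v s) (tangent X u v s).
(* T' = k_g g + k_n n,  g' = -k_g T + tau_g n *)
Definition geod_curv X u v (s : R) : R :=
  dot (vD (tangent X u v) s) (cbinormal X u v s).
Definition geod_tors X u v (s : R) : R :=
  dot (vD (cbinormal X u v) s) (cnormal X u v s).

Definition unit_speed_curve_on (X : R -> R -> V3) (D : R * R -> Prop)
    (I : R -> Prop) (u v : R -> R) : Prop :=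
  open I /\
  forall s, I s ->
    D (u s, v s) /\ ex_derive u s /\ ex_derive v s /\
    ex_derive (Derive u) s /\ ex_derive (Derive v) s /\
    vnorm (tangent X u v s) = 1.

Definition angle_fn (X : R -> R -> V3) (u v : R -> R) (I : R -> Prop)
    (sigma : R -> R) : Prop :=
  forall s, I s ->
    ex_derive sigma s /\
    cos (sigma s) = dot (tangent X u v s) (vunit (pu X (u s) (v s))) /\
    sin (sigma s) = dot (tangent X u v s) (vunit (pv X (u s) (v s))).

Definition liouville (X : R -> R -> V3) (u v sigma : R -> R) (s : R) : R :=
  Derive sigma s + kg_u X (u s) (v s) * cos (sigma s)
                 + kg_v X (u s) (v s) * sin (sigma s).

Definition bertrand_D_pair (X : R -> R -> V3) (u v : R -> R) (I : R -> Prop)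
    (X1 : R -> R -> V3) (u1 v1 : R -> R) (I1 : R -> Prop)
    (phi : R -> R) (lam : R) : Prop :=
  lam <> 0 /\
  forall s, I s ->
    I1 (phi s) /\ ex_derive phi s /\
    cbinormal X u v s = cbinormal X1 u1 v1 (phi s) /\
    curve X u v s = vadd (curve X1 u1 v1 (phi s)) (vscale lam (cbinormal X1 u1 v1 (phi s))).

(* Main.v *)
Require Import Defs.
From Stdlib Require Import Reals.
From Coquelicot Require Import Coquelicot.
Open Scope R_scope.
From Stdlib Require Import Lra Psatz.
Require Import Defs.


Ltac ringR := unfold vadd, vscale, cross, dot, pu, pv, vD; cbn [c1 c2 c3 fst snd]; match goal with |- ?x = ?y => change (x = y :> R) end; ring.

Lemma drep (f : R -> R) x l l' : l = l' -> is_derive f x l -> is_derive f x l'.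
Proof. intros ->; auto. Qed.

Lemma dmul (f g : R -> R) x df dg : is_derive f x df -> is_derive g x dg ->
  is_derive (fun t => f t * g t) x (df * g x + f x * dg).
Proof. intros H1 H2. exact (is_derive_mult f g x df dg H1 H2 Rmult_comm). Qed.

Lemma dadd (f g : R -> R) x df dg : is_derive f x df -> is_derive g x dg ->
  is_derive (fun t => f t + g t) x (df + dg).
Proof. intros H1 H2. exact (is_derive_plus f g x df dg H1 H2). Qed.

Lemma dsub (f g : R -> R) x df dg : is_derive f x df -> is_derive g x dg ->
  is_derive (fun t => f t - g t) x (df - dg).
Proof. intros H1 H2. exact (is_derive_minus f g x df dg H1 H2). Qed.

Definition isvd (f : R -> V3) t (w : V3) :=
  is_derive (fun t => c1 (f t)) t (c1 w) /\ is_derive (fun t => c2 (f t)) t (c2 w) /\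
  is_derive (fun t => c3 (f t)) t (c3 w).

Lemma isvd_vD f t w : isvd f t w -> vD f t = w.
Proof.
  intros [H1 [H2 H3]]. unfold vD.
  replace (Derive (fun t0 => c1 (f t0)) t) with (c1 w) by (symmetry; apply is_derive_unique; auto).
  replace (Derive (fun t0 => c2 (f t0)) t) with (c2 w) by (symmetry; apply is_derive_unique; auto).
  replace (Derive (fun t0 => c3 (f t0)) t) with (c3 w) by (symmetry; apply is_derive_unique; auto).
  destruct w as [[a b] c]; reflexivity.
Qed.

Lemma isvd_ext (f g : R -> V3) (t : R) w : locally t (fun s => f s = g s) -> isvd f t w -> isvd g t w.
Proof.
  intros L [H1 [H2 H3]]; split; [|split].
  - refine (@is_derive_ext_loc R_AbsRing R_NormedModule (fun s => c1 (f s)) (fun s => c1 (g s)) t _ _ H1).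
    eapply filter_imp; [|exact L]. intros x E; simpl; rewrite E; auto.
  - refine (@is_derive_ext_loc R_AbsRing R_NormedModule (fun s => c2 (f s)) (fun s => c2 (g s)) t _ _ H2).
    eapply filter_imp; [|exact L]. intros x E; simpl; rewrite E; auto.
  - refine (@is_derive_ext_loc R_AbsRing R_NormedModule (fun s => c3 (f s)) (fun s => c3 (g s)) t _ _ H3).
    eapply filter_imp; [|exact L]. intros x E; simpl; rewrite E; auto.
Qed.

Lemma isvd_add f g t a b : isvd f t a -> isvd g t b ->
  isvd (fun t => vadd (f t) (g t)) t (vadd a b).
Proof.
  intros [A1 [A2 A3]] [B1 [B2 B3]]; split; [|split]; simpl.
  - exact (dadd _ _ _ _ _ A1 B1).
  - exact (dadd _ _ _ _ _ A2 B2).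
  - exact (dadd _ _ _ _ _ A3 B3).
Qed.

Lemma isvd_scale (h : R -> R) f t dh a : is_derive h t dh -> isvd f t a ->
  isvd (fun t => vscale (h t) (f t)) t (vadd (vscale dh (f t)) (vscale (h t) a)).
Proof.
  intros Hh [A1 [A2 A3]]; split; [|split]; simpl.
  - exact (dmul _ _ _ _ _ Hh A1).
  - exact (dmul _ _ _ _ _ Hh A2).
  - exact (dmul _ _ _ _ _ Hh A3).
Qed.

Lemma isvd_cross f g t a b : isvd f t a -> isvd g t b ->
  isvd (fun t => cross (f t) (g t)) t (vadd (cross a (g t)) (cross (f t) b)).
Proof.
  intros [A1 [A2 A3]] [B1 [B2 B3]]; split; [|split]; unfold cross, vadd; simpl.
  - eapply drep; [|exact (dsub _ _ _ _ _ (dmul _ _ _ _ _ A2 B3) (dmul _ _ _ _ _ A3 B2))]. ringR.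
  - eapply drep; [|exact (dsub _ _ _ _ _ (dmul _ _ _ _ _ A3 B1) (dmul _ _ _ _ _ A1 B3))]. ringR.
  - eapply drep; [|exact (dsub _ _ _ _ _ (dmul _ _ _ _ _ A1 B2) (dmul _ _ _ _ _ A2 B1))]. ringR.
Qed.

Lemma ddot f g t a b : isvd f t a -> isvd g t b ->
  is_derive (fun t => dot (f t) (g t)) t (dot a (g t) + dot (f t) b).
Proof.
  intros [A1 [A2 A3]] [B1 [B2 B3]]; unfold dot.
  eapply drep; [|exact (dadd _ _ _ _ _ (dadd _ _ _ _ _ (dmul _ _ _ _ _ A1 B1) (dmul _ _ _ _ _ A2 B2)) (dmul _ _ _ _ _ A3 B3))]. ringR.
Qed.

Lemma dchain (F : R -> R -> R) (u v : R -> R) s du dv :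
  diff2 F (u s) (v s) -> is_derive u s du -> is_derive v s dv ->
  is_derive (fun t => F (u t) (v t)) s
    (Derive (fun a => F a (v s)) (u s) * du + Derive (fun b => F (u s) b) (v s) * dv).
Proof.
  intros HF Hu Hv. apply is_derive_Reals. apply is_derive_Reals in Hu. apply is_derive_Reals in Hv.
  exact (derivable_pt_lim_comp_2d _ _ _ _ _ _ _ _ HF Hu Hv).
Qed.

Lemma isvd_chain (F : R -> R -> V3) (u v : R -> R) s du dv :
  vdiff2 F (u s) (v s) -> is_derive u s du -> is_derive v s dv ->
  isvd (fun t => F (u t) (v t)) s
    (vadd (vscale du (pu F (u s) (v s))) (vscale dv (pv F (u s) (v s)))).
Proof.
  intros [H1 [H2 H3]] Hu Hv; split; [|split]; simpl.
  - eapply drep; [|exact (dchain _ _ _ _ _ _ H1 Hu Hv)]. ringR.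
  - eapply drep; [|exact (dchain _ _ _ _ _ _ H2 Hu Hv)]. ringR.
  - eapply drep; [|exact (dchain _ _ _ _ _ _ H3 Hu Hv)]. ringR.
Qed.

Lemma dot_self_pos w : w <> zero3 -> 0 < dot w w.
Proof.
  destruct w as [[a b] c]; unfold dot, zero3; cbn [c1 c2 c3 fst snd]; intros H.
  destruct (Rle_lt_dec (a*a+b*b+c*c) 0) as [Hle|Hlt]; [|exact Hlt].
  exfalso; apply H.
  assert (a = 0) by nra. assert (b = 0) by nra. assert (c = 0) by nra. subst; reflexivity.
Qed.

Lemma isvd_vunit f t a : isvd f t a -> f t <> zero3 ->
  exists b, isvd (fun t => vunit (f t)) t b.
Proof.
  intros Hf Hne. pose proof (dot_self_pos _ Hne) as Hp.
  pose proof (ddot _ _ _ _ _ Hf Hf) as Hd.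
  pose proof (is_derive_sqrt _ _ _ Hd Hp) as Hs.
  assert (sqrt (dot (f t) (f t)) <> 0) by (apply Rgt_not_eq, sqrt_lt_R0; auto).
  pose proof (is_derive_inv _ _ _ Hs H) as Hi.
  eexists. exact (isvd_scale _ _ _ _ _ Hi Hf).
Qed.



Ltac crunch := unfold vadd, vscale, cross, dot, zero3; cbn [c1 c2 c3 fst snd].

Lemma dot_nonneg w : 0 <= dot w w.
Proof. crunch. nra. Qed.

Lemma vunit_unit w : w <> zero3 -> dot (vunit w) (vunit w) = 1.
Proof.
  intros H. pose proof (dot_self_pos _ H) as Hp.
  unfold vunit, vnorm.
  assert (E : dot (vscale (/ sqrt (dot w w)) w) (vscale (/ sqrt (dot w w)) w)
              = (/ sqrt (dot w w))^2 * dot w w) by (crunch; ring).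
  rewrite E. assert (Hs : 0 < sqrt (dot w w)) by (apply sqrt_lt_R0; auto).
  rewrite <- (sqrt_sqrt (dot w w)) at 2 by lra. field. lra.
Qed.

Lemma dot_comb_cross k a b p q : dot (vadd (vscale a p) (vscale b q)) (vscale k (cross p q)) = 0.
Proof. crunch. ring. Qed.

Lemma cross_zero_l q : cross zero3 q = zero3.
Proof. unfold cross, zero3; cbn [c1 c2 c3 fst snd]. f_equal; [f_equal|]; ring. Qed.
Lemma cross_zero_r q : cross q zero3 = zero3.
Proof. unfold cross, zero3; cbn [c1 c2 c3 fst snd]. f_equal; [f_equal|]; ring. Qed.

Lemma pt_facts X D I u v t :
  regular_surface X D -> orthogonal_param X D -> unit_speed_curve_on X D I u v -> I t ->
  tangent X u v t = vadd (vscale (Derive u t) (pu X (u t) (v t))) (vscale (Derive v t) (pv X (u t) (v t))) /\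
  isvd (curve X u v) t (tangent X u v t) /\
  dot (tangent X u v t) (tangent X u v t) = 1 /\
  dot (cnormal X u v t) (cnormal X u v t) = 1 /\
  dot (tangent X u v t) (cnormal X u v t) = 0 /\
  dot (pu X (u t) (v t)) (pv X (u t) (v t)) = 0 /\
  0 < dot (pu X (u t) (v t)) (pu X (u t) (v t)) /\
  0 < dot (pv X (u t) (v t)) (pv X (u t) (v t)) /\
  cross (pu X (u t) (v t)) (pv X (u t) (v t)) <> zero3.
Proof.
  intros [HDo HX] HO [HIo HC] It.
  destruct (HC t It) as [HDt [Hu [Hv [_ [_ Hn]]]]].
  destruct (HX _ _ HDt) as [HX0 [_ [_ Hcr]]].
  pose proof (isvd_chain X u v t _ _ HX0 (Derive_correct _ _ Hu) (Derive_correct _ _ Hv)) as Hch.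
  assert (HT : tangent X u v t = vadd (vscale (Derive u t) (pu X (u t) (v t))) (vscale (Derive v t) (pv X (u t) (v t)))).
  { unfold tangent. apply isvd_vD. exact Hch. }
  split; [exact HT|]. split; [rewrite HT; exact Hch|].
  split.
  { unfold vnorm in Hn. rewrite <- (sqrt_sqrt (dot _ _)) by apply dot_nonneg. rewrite Hn; ring. }
  split; [unfold cnormal, snormal; apply vunit_unit; exact Hcr|].
  split; [rewrite HT; unfold cnormal, snormal, vunit; apply dot_comb_cross|].
  split; [apply HO; exact HDt|].
  split; [apply dot_self_pos; intros E; apply Hcr; rewrite E; apply cross_zero_l|].
  split; [apply dot_self_pos; intros E; apply Hcr; rewrite E; apply cross_zero_r|].
  exact Hcr.
Qed.



Lemma deriv_uniq (f : R -> R) x l1 l2 : is_derive f x l1 -> is_derive f x l2 -> l1 = l2.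
Proof. intros H1 H2. apply is_derive_unique in H1. apply is_derive_unique in H2. congruence. Qed.

Lemma loc_slice_v (D : R * R -> Prop) U W : open D -> D (U, W) -> locally W (fun t => D (U, t)).
Proof.
  intros HD H. destruct (HD _ H) as [eps He]. exists eps. intros t Ht. apply He.
  split; [apply ball_center | exact Ht].
Qed.
Lemma loc_slice_u (D : R * R -> Prop) U W : open D -> D (U, W) -> locally U (fun t => D (t, W)).
Proof.
  intros HD H. destruct (HD _ H) as [eps He]. exists eps. intros t Ht. apply He.
  split; [exact Ht | apply ball_center].
Qed.

Lemma dot_addl a b c : dot (vadd a b) c = dot a c + dot b c.
Proof. crunch; ring. Qed.
Lemma dot_addr a b c : dot c (vadd a b) = dot c a + dot c b.
Proof. crunch; ring. Qed.
Lemma dot_scl k a c : dot (vscale k a) c = k * dot a c.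
Proof. crunch; ring. Qed.
Lemma dot_scr k a c : dot c (vscale k a) = k * dot c a.
Proof. crunch; ring. Qed.
Lemma dot_comm a b : dot a b = dot b a.
Proof. crunch; ring. Qed.

Lemma F_deriv X D U W : regular_surface X D -> orthogonal_param X D -> D (U, W) ->
  dot (pv (pu X) U W) (pv X U W) + dot (pu X U W) (pv (pv X) U W) = 0 /\
  dot (pu (pu X) U W) (pv X U W) + dot (pu X U W) (pu (pv X) U W) = 0.
Proof.
  intros [HDo HX] HO HUW. destruct (HX _ _ HUW) as [_ [Hpu [Hpv _]]].
  split.
  - pose proof (isvd_chain (pu X) (fun _ => U) (fun t => t) W 0 1 Hpu (is_derive_const U W) (is_derive_id W)) as A.
    pose proof (isvd_chain (pv X) (fun _ => U) (fun t => t) W 0 1 Hpv (is_derive_const U W) (is_derive_id W)) as B.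
    pose proof (ddot _ _ _ _ _ A B) as C. simpl in C.
    assert (C0 : is_derive (fun t => dot (pu X U t) (pv X U t)) W 0).
    { apply (is_derive_ext_loc (fun _ => 0)). 
      - eapply filter_imp; [|exact (loc_slice_v _ _ _ HDo HUW)]. intros t Ht. symmetry. apply HO; auto.
      - apply (is_derive_const 0 W). }
    pose proof (deriv_uniq _ _ _ _ C C0) as E.
    rewrite dot_addl, dot_addr, !dot_scl, !dot_scr in E. lra.
  - pose proof (isvd_chain (pu X) (fun t => t) (fun _ => W) U 1 0 Hpu (is_derive_id U) (is_derive_const W U)) as A.
    pose proof (isvd_chain (pv X) (fun t => t) (fun _ => W) U 1 0 Hpv (is_derive_id U) (is_derive_const W U)) as B.
    pose proof (ddot _ _ _ _ _ A B) as C. simpl in C.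
    assert (C0 : is_derive (fun t => dot (pu X t W) (pv X t W)) U 0).
    { apply (is_derive_ext_loc (fun _ => 0)). 
      - eapply filter_imp; [|exact (loc_slice_u _ _ _ HDo HUW)]. intros t Ht. symmetry. apply HO; auto.
      - apply (is_derive_const 0 U). }
    pose proof (deriv_uniq _ _ _ _ C C0) as E.
    rewrite dot_addl, dot_addr, !dot_scl, !dot_scr in E. lra.
Qed.



Lemma dot_comb_p a b k p q : dot (vadd (vscale a p) (vscale b q)) (vscale k p) = k * (a * dot p p + b * dot p q).
Proof. crunch; ring. Qed.
Lemma dot_comb_q a b k p q : dot (vadd (vscale a p) (vscale b q)) (vscale k q) = k * (a * dot p q + b * dot q q).
Proof. crunch; ring. Qed.
Lemma L1 w k p q : dot w (cross (vscale k (cross p q)) p) = k*(dot p p * dot w q - dot p q * dot w p).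
Proof. crunch; ring. Qed.
Lemma L2 w k p q : dot w (cross (vscale k (cross p q)) q) = k*(dot p q * dot w q - dot q q * dot w p).
Proof. crunch; ring. Qed.
Lemma L3 w k a b p q : dot w (cross (vscale k (cross p q)) (vadd (vscale a p) (vscale b q)))
  = k*(a*(dot p p * dot w q - dot p q * dot w p) + b*(dot p q * dot w q - dot q q * dot w p)).
Proof. crunch; ring. Qed.
Lemma cross_norm2 p q : dot (cross p q) (cross p q) = dot p p * dot q q - dot p q ^ 2.
Proof. crunch; ring. Qed.

Lemma liouville_eq X D I u v sigma s :
  regular_surface X D -> orthogonal_param X D -> unit_speed_curve_on X D I u v ->
  angle_fn X u v I sigma -> I s ->
  exists T', isvd (tangent X u v) s T' /\ liouville X u v sigma s = dot T' (cbinormal X u v s).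
Proof.
  intros HS HO HC HA Is.
  pose proof HS as [HDo HX]. pose proof HC as [HIo HCt].
  destruct (HCt s Is) as [HDs [Hu [Hv [Hdu [Hdv _]]]]].
  destruct (HX _ _ HDs) as [HX0 [Hpu [Hpv Hcr]]].
  set (U := u s) in *. set (W := v s) in *.
  set (p := pu X U W). set (q := pv X U W).
  set (du := Derive u s). set (dv := Derive v s).
  set (ddu := Derive (Derive u) s). set (ddv := Derive (Derive v) s).
  pose proof (isvd_chain (pu X) u v s du dv Hpu (Derive_correct _ _ Hu) (Derive_correct _ _ Hv)) as Hp'.
  pose proof (isvd_chain (pv X) u v s du dv Hpv (Derive_correct _ _ Hu) (Derive_correct _ _ Hv)) as Hq'.
  fold U W in Hp', Hq'.
  set (p' := vadd (vscale du (pu (pu X) U W)) (vscale dv (pv (pu X) U W))) in Hp'.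
  set (q' := vadd (vscale du (pu (pv X) U W)) (vscale dv (pv (pv X) U W))) in Hq'.
  pose proof (isvd_add _ _ _ _ _ (isvd_scale _ _ _ _ _ (Derive_correct _ _ Hdu) Hp')
                                 (isvd_scale _ _ _ _ _ (Derive_correct _ _ Hdv) Hq')) as HT'.
  cbv beta in HT'. fold U W p q du dv ddu ddv in HT'.
  assert (Hloc : locally s (fun t => vadd (vscale (Derive u t) (pu X (u t) (v t))) (vscale (Derive v t) (pv X (u t) (v t))) = tangent X u v t)).
  { apply (locally_open I); auto. intros t It. symmetry. apply (pt_facts X D I u v t HS HO HC It). }
  eexists; split; [exact (isvd_ext _ _ _ _ Hloc HT')|].
  destruct (pt_facts X D I u v s HS HO HC Is) as [HTs [_ [_ [_ [_ [Hpq [Hpp [Hqq _]]]]]]]].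
  fold U W p q du dv in HTs, Hpq, Hpp, Hqq.
  assert (Hang : forall t, I t ->
    cos (sigma t) = Derive u t * sqrt (dot (pu X (u t) (v t)) (pu X (u t) (v t))) /\
    sin (sigma t) = Derive v t * sqrt (dot (pv X (u t) (v t)) (pv X (u t) (v t)))).
  { intros t It. destruct (HA t It) as [_ [Hc Hs]].
    destruct (pt_facts X D I u v t HS HO HC It) as [HTt [_ [_ [_ [_ [Hpqt [Hppt [Hqqt _]]]]]]]].
    rewrite Hc, Hs, HTt. unfold vunit, vnorm. rewrite dot_comb_p, dot_comb_q, Hpqt.
    assert (0 < sqrt (dot (pu X (u t) (v t)) (pu X (u t) (v t)))) by (apply sqrt_lt_R0; auto).
    assert (0 < sqrt (dot (pv X (u t) (v t)) (pv X (u t) (v t)))) by (apply sqrt_lt_R0; auto).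
    split.
    - rewrite <- (sqrt_sqrt (dot (pu X (u t) (v t)) (pu X (u t) (v t)))) at 2 by lra. field. lra.
    - rewrite <- (sqrt_sqrt (dot (pv X (u t) (v t)) (pv X (u t) (v t)))) at 2 by lra. field. lra. }
  destruct (HA s Is) as [Hsg _].
  set (sg' := Derive sigma s).
  assert (Dcos : is_derive (fun t => cos (sigma t)) s (sg' * - sin (sigma s))).
  { exact (is_derive_comp cos sigma s _ _ (is_derive_cos _) (Derive_correct _ _ Hsg)). }
  assert (Dsin : is_derive (fun t => sin (sigma t)) s (sg' * cos (sigma s))).
  { exact (is_derive_comp sin sigma s _ _ (is_derive_sin _) (Derive_correct _ _ Hsg)). }
  assert (Dc2 : is_derive (fun t => cos (sigma t)) s
     (ddu * sqrt (dot p p) + du * ((dot p' p + dot p p') / (2 * sqrt (dot p p))))).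
  { apply (is_derive_ext_loc (fun t => Derive u t * sqrt (dot (pu X (u t) (v t)) (pu X (u t) (v t))))).
    - apply (locally_open I); auto. intros t It. symmetry. apply (Hang t It).
    - exact (dmul _ _ _ _ _ (Derive_correct _ _ Hdu) (is_derive_sqrt _ _ _ (ddot _ _ _ _ _ Hp' Hp') Hpp)). }
  assert (Ds2 : is_derive (fun t => sin (sigma t)) s
     (ddv * sqrt (dot q q) + dv * ((dot q' q + dot q q') / (2 * sqrt (dot q q))))).
  { apply (is_derive_ext_loc (fun t => Derive v t * sqrt (dot (pv X (u t) (v t)) (pv X (u t) (v t))))).
    - apply (locally_open I); auto. intros t It. symmetry. apply (Hang t It).
    - exact (dmul _ _ _ _ _ (Derive_correct _ _ Hdv) (is_derive_sqrt _ _ _ (ddot _ _ _ _ _ Hq' Hq') Hqq)). }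
  pose proof (deriv_uniq _ _ _ _ Dcos Dc2) as Ec.
  pose proof (deriv_uniq _ _ _ _ Dsin Ds2) as Es.
  destruct (Hang s Is) as [Cs Ss]. fold U W p q du dv in Cs, Ss.
  destruct (F_deriv X D U W HS HO HDs) as [Fv Fu]. fold p q in Fv, Fu.
  pose proof (sin2_cos2 (sigma s)) as Hsc. unfold Rsqr in Hsc.
  unfold liouville, kg_u, kg_v, cbinormal, cnormal, snormal. fold U W p q sg'.
  change (vD (fun t => pu X t W) U) with (pu (pu X) U W).
  change (vD (fun t => pv X U t) W) with (pv (pv X) U W).
  rewrite HTs. unfold vunit, vnorm. fold p q.
  rewrite L1, L2, L3.
  rewrite cross_norm2, Hpq.
  unfold p', q' in *.
  rewrite !dot_addl, !dot_scl in *. rewrite !dot_addr, !dot_scr in *.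
  rewrite ?dot_addl, ?dot_scl, ?dot_addr, ?dot_scr.
  rewrite !(dot_comm p (pu (pu X) U W)), !(dot_comm p (pv (pu X) U W)), !(dot_comm p (pv (pv X) U W)),
    !(dot_comm p (pu (pv X) U W)), !(dot_comm q (pu (pv X) U W)), !(dot_comm q (pv (pv X) U W)),
    !(dot_comm q p), Hpq in *.
  set (A1p := dot (pu (pu X) U W) p) in *. set (A1q := dot (pu (pu X) U W) q) in *.
  set (A2p := dot (pv (pu X) U W) p) in *. set (A2q := dot (pv (pu X) U W) q) in *.
  set (B1p := dot (pu (pv X) U W) p) in *. set (B1q := dot (pu (pv X) U W) q) in *.
  set (B2p := dot (pv (pv X) U W) p) in *. set (B2q := dot (pv (pv X) U W) q) in *.
  assert (Ha : 0 < sqrt (dot p p)) by (apply sqrt_lt_R0; auto).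
  assert (Hb : 0 < sqrt (dot q q)) by (apply sqrt_lt_R0; auto).
  replace (dot p p * dot q q - 0 ^ 2) with (dot p p * dot q q) by ring.
  rewrite sqrt_mult by lra.
  set (a := sqrt (dot p p)) in *. set (b := sqrt (dot q q)) in *.
  assert (Ep : dot p p = a ^ 2) by (unfold a; rewrite <- sqrt_sqrt at 1 by lra; ring).
  assert (Eq : dot q q = b ^ 2) by (unfold b; rewrite <- sqrt_sqrt at 1 by lra; ring).
  rewrite Ep, Eq in *. clearbody a b.
  set (c := cos (sigma s)) in *. set (sn := sin (sigma s)) in *.
  assert (Hsgx : sg' = c * (sg' * c) + sn * (sg' * sn)).
  { transitivity (sg' * (sn * sn + c * c)); [rewrite Hsc; ring| ring]. }
  rewrite Hsgx.
  replace (sg' * sn) with (- (sg' * - sn)) by ring.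
  rewrite Ec, Es. rewrite Cs, Ss in *.
  assert (E1 : du ^ 2 * a ^ 2 + dv ^ 2 * b ^ 2 = 1) by (rewrite <- Hsc; ring).
  assert (Z : forall L R0 : R, L - R0 = (1 - (du ^ 2 * a ^ 2 + dv ^ 2 * b ^ 2)) * ((du * A1q - dv * B2p) / (a * b)) -> L = R0).
  { intros L R0 HZ. rewrite E1 in HZ. lra. }
  apply Z. replace A2q with (- B2p) by lra. replace B1p with (- A1q) by lra. match goal with |- ?x = ?y => change (x = y :> R) end. field. lra.
Qed.

Lemma dot_cross_self n T : dot (cross n T) T = 0.
Proof. crunch; ring. Qed.

Lemma curve_full X D I u v sigma s :
  regular_surface X D -> orthogonal_param X D -> unit_speed_curve_on X D I u v ->
  angle_fn X u v I sigma -> I s ->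
  exists T' g', isvd (tangent X u v) s T' /\ isvd (cbinormal X u v) s g' /\
    liouville X u v sigma s = dot T' (cbinormal X u v s) /\
    dot g' (tangent X u v s) = - dot T' (cbinormal X u v s) /\
    dot g' (cbinormal X u v s) = 0 /\
    dot (tangent X u v s) (tangent X u v s) = 1 /\
    dot (cnormal X u v s) (cnormal X u v s) = 1 /\
    dot (tangent X u v s) (cnormal X u v s) = 0 /\
    isvd (curve X u v) s (tangent X u v s).
Proof.
  intros HS HO HC HA Is.
  destruct (liouville_eq X D I u v sigma s HS HO HC HA Is) as [T' [HT' HL]].
  pose proof HS as [HDo HX]. pose proof HC as [HIo HCt].
  destruct (HCt s Is) as [HDs [Hu [Hv _]]].
  destruct (HX _ _ HDs) as [_ [Hpu [Hpv Hcr]]].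
  pose proof (isvd_chain (pu X) u v s _ _ Hpu (Derive_correct _ _ Hu) (Derive_correct _ _ Hv)) as Hp'.
  pose proof (isvd_chain (pv X) u v s _ _ Hpv (Derive_correct _ _ Hu) (Derive_correct _ _ Hv)) as Hq'.
  pose proof (isvd_cross _ _ _ _ _ Hp' Hq') as Hc'.
  destruct (isvd_vunit _ _ _ Hc' Hcr) as [n' Hn'].
  pose proof (isvd_cross _ _ _ _ _ Hn' HT') as Hg'.
  destruct (pt_facts X D I u v s HS HO HC Is) as [_ [Hcv [HTT [Hnn [HTn _]]]]].
  exists T', (vadd (cross n' (tangent X u v s)) (cross (vunit (cross (pu X (u s) (v s)) (pv X (u s) (v s)))) T')).
  split; [exact HT'|]. split; [exact Hg'|]. split; [exact HL|].
  split.
  { pose proof (ddot _ _ _ _ _ Hg' HT') as D1.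
    assert (D0 : is_derive (fun t => dot (cbinormal X u v t) (tangent X u v t)) s 0).
    { apply (is_derive_ext (fun _ => 0)). intros t. unfold cbinormal. symmetry. apply dot_cross_self.
      apply (is_derive_const 0 s). }
    pose proof (deriv_uniq _ _ _ _ D1 D0) as E. cbv beta in E.
    unfold cbinormal, cnormal, snormal in *.
    rewrite (dot_comm T'). lra. }
  split.
  { pose proof (ddot _ _ _ _ _ Hg' Hg') as D1.
    assert (D0 : is_derive (fun t => dot (cbinormal X u v t) (cbinormal X u v t)) s 0).
    { apply (is_derive_ext_loc (fun _ => 1)).
      - apply (locally_open I); auto. intros t It.
        destruct (pt_facts X D I u v t HS HO HC It) as [_ [_ [HTTt [Hnnt [HTnt _]]]]].
        unfold cbinormal. rewrite cross_norm2, HTTt, Hnnt, dot_comm, HTnt. match goal with |- ?x = ?y => change (x = y :> R) end; ring.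
      - apply (is_derive_const 1 s). }
    pose proof (deriv_uniq _ _ _ _ D1 D0) as E. cbv beta in E.
    unfold cbinormal, cnormal, snormal in *.
    rewrite (dot_comm (cross _ _) (vadd _ _)) in E. lra. }
  auto.
Qed.



Lemma isvd_unique f t w1 w2 : isvd f t w1 -> isvd f t w2 -> w1 = w2.
Proof. intros H1 H2. rewrite <- (isvd_vD _ _ _ H1). apply isvd_vD; auto. Qed.

Lemma isvd_comp (f : R -> V3) (phi : R -> R) s w a :
  isvd f (phi s) w -> is_derive phi s a -> isvd (fun t => f (phi t)) s (vscale a w).
Proof.
  intros [H1 [H2 H3]] Hp; split; [|split]; simpl.
  - exact (is_derive_comp (fun t => c1 (f t)) phi s _ _ H1 Hp).
  - exact (is_derive_comp (fun t => c2 (f t)) phi s _ _ H2 Hp).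
  - exact (is_derive_comp (fun t => c3 (f t)) phi s _ _ H3 Hp).
Qed.

Lemma L4 w n T : dot w (cross T (cross n T)) = dot T T * dot w n - dot T n * dot w T.
Proof. crunch; ring. Qed.
Lemma L5 a l w x y : dot (vscale a w) (cross (vadd (vscale a x) (vscale l (vscale a w))) y) = a * a * dot w (cross x y).
Proof. crunch; ring. Qed.
Lemma L6 w n T : (dot w (cross n T))^2 =
  dot w w * (dot n n * dot T T - dot n T ^ 2) - dot w n * (dot w n * dot T T - dot n T * dot w T)
  + dot w T * (dot w n * dot n T - dot n n * dot w T).
Proof. crunch; ring. Qed.
Lemma L7 a l w x : dot (vscale a w) (vadd (vscale a x) (vscale l (vscale a w))) = a * a * (dot w x + l * dot w w).
Proof. crunch; ring. Qed.
Lemma L8 a l x w : dot (vadd (vscale a x) (vscale l (vscale a w))) (vadd (vscale a x) (vscale l (vscale a w)))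
  = a * a * (dot x x + 2 * l * dot w x + l * l * dot w w).
Proof. crunch; ring. Qed.

Theorem corollary2 (X X1 : R -> R -> V3) (D D1 : R * R -> Prop) (I I1 : R -> Prop)
    (u v u1 v1 sigma sigma1 phi : R -> R) (lam : R) :
  regular_surface X D -> orthogonal_param X D ->
  regular_surface X1 D1 -> orthogonal_param X1 D1 ->
  unit_speed_curve_on X D I u v -> unit_speed_curve_on X1 D1 I1 u1 v1 ->
  angle_fn X u v I sigma -> angle_fn X1 u1 v1 I1 sigma1 ->
  bertrand_D_pair X u v I X1 u1 v1 I1 phi lam ->
  forall s, I s ->
    liouville X u v sigma s - liouville X1 u1 v1 sigma1 (phi s)
    = lam * (liouville X u v sigma s * liouville X1 u1 v1 sigma1 (phi s)
             - geod_tors X u v s * geod_tors X1 u1 v1 (phi s)).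
Proof.
  intros HS HO HS1 HO1 HC HC1 HA HA1 [_ HB] s Is.
  destruct (HB s Is) as [I1s [Hph [Hg Hx]]].
  destruct (curve_full X D I u v sigma s HS HO HC HA Is)
    as [T' [g' [HT' [Hg' [HL [HgT [Hgg [HTT [Hnn [HTn Hcv]]]]]]]]]].
  destruct (curve_full X1 D1 I1 u1 v1 sigma1 (phi s) HS1 HO1 HC1 HA1 I1s)
    as [T1' [G' [HT1' [HG' [HL1 [HGT [HGg [HTT1 [Hnn1 [HTn1 Hcv1]]]]]]]]]].
  pose proof HC as [HIo _].
  set (a := Derive phi s).
  pose proof (Derive_correct _ _ Hph) as Hpa. fold a in Hpa.
  assert (ET : tangent X u v s = vadd (vscale a (tangent X1 u1 v1 (phi s))) (vscale lam (vscale a G'))).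
  { apply (isvd_unique (curve X u v) s); [exact Hcv|].
    apply (isvd_ext (fun t => vadd (curve X1 u1 v1 (phi t)) (vscale lam (cbinormal X1 u1 v1 (phi t))))).
    - apply (locally_open I); auto. intros t It. symmetry. apply (HB t It).
    - pose proof (isvd_scale (fun _ => lam) _ _ _ _ (is_derive_const lam s) (isvd_comp _ _ _ _ _ HG' Hpa)) as A.
      pose proof (isvd_add _ _ _ _ _ (isvd_comp _ _ _ _ _ Hcv1 Hpa) A) as B.
      replace (vscale lam (vscale a G')) with (vadd (vscale 0 (cbinormal X1 u1 v1 (phi s))) (vscale lam (vscale a G'))).
      + exact B.
      + crunch. f_equal; [f_equal|]; ring. }
  assert (Eg' : g' = vscale a G').
  { apply (isvd_unique (cbinormal X u v) s); [exact Hg'|].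
    apply (isvd_ext (fun t => cbinormal X1 u1 v1 (phi t))).
    - apply (locally_open I); auto. intros t It. symmetry. apply (HB t It).
    - exact (isvd_comp _ _ _ _ _ HG' Hpa). }
  unfold geod_tors. rewrite (isvd_vD _ _ _ Hg'), (isvd_vD _ _ _ HG').
  rewrite HL, HL1.
  assert (Etau : dot g' (cnormal X u v s) = dot g' (cross (tangent X u v s) (cbinormal X u v s))).
  { unfold cbinormal at 1. rewrite L4, HTT, HTn. ring. }
  assert (Etau1 : dot G' (cnormal X1 u1 v1 (phi s)) = dot G' (cross (tangent X1 u1 v1 (phi s)) (cbinormal X1 u1 v1 (phi s)))).
  { unfold cbinormal at 1. rewrite L4, HTT1, HTn1. ring. }
  assert (Ek : dot T' (cbinormal X u v s) = - (a * a * (dot G' (tangent X1 u1 v1 (phi s)) + lam * dot G' G'))).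
  { assert (E0 : dot T' (cbinormal X u v s) = - dot g' (tangent X u v s)) by lra.
    rewrite E0, Eg', ET, L7. ring. }
  assert (Ek1 : dot T1' (cbinormal X1 u1 v1 (phi s)) = - dot G' (tangent X1 u1 v1 (phi s))) by lra.
  rewrite Ek, Ek1, Etau, Hg, ET, Eg', L5, <- Etau1.
  rewrite ET, L8, HTT1 in HTT.
  pose proof (L6 G' (cnormal X1 u1 v1 (phi s)) (tangent X1 u1 v1 (phi s))) as P.
  change (cross (cnormal X1 u1 v1 (phi s)) (tangent X1 u1 v1 (phi s))) with (cbinormal X1 u1 v1 (phi s)) in P.
  rewrite HGg, Hnn1, HTT1, (dot_comm (cnormal _ _ _ _)), HTn1 in P.
  set (x := dot G' (tangent X1 u1 v1 (phi s))) in *.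
  set (y := dot G' (cnormal X1 u1 v1 (phi s))) in *.
  set (G := dot G' G') in *.
  assert (HG : G = x ^ 2 + y ^ 2) by nra.
  assert (Z : forall L R0 : R, L - R0 = x * (1 - a * a * (1 + 2 * lam * x + lam * lam * G)) + lam * a * a * (x ^ 2 + y ^ 2 - G) -> L = R0).
  { intros L R0 HZ. rewrite HTT, HG in HZ. lra. }
  apply Z. ring.
Qed.
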